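(* In the setting of the context, consider a Case 3 spacetime ($\partial_v r_-<0$). If there exist constants $\alpha\in(0,1)$ and $\varepsilon>0$ such that $$\alpha\frac{dx_+}{dv}+(1-\alpha)\frac{dx_-}{dv}>-\frac{h_c}{2}\alpha(1-\alpha)(1-\varepsilon)(x_+-x_-)^2$$ holds for all $v>v_0$ with $v_0$ sufficiently large, then the spacetime is of Class 2, i.e. some radially outgoing null geodesics emitted from the inner AH never reach the outer AH.
   Context: Spherically symmetric spacetime $ds^2=-f(v,r)A(v,r)^2dv^2+2A(v,r)\,dr\,dv+r^2d\Omega^2$ with $A>0$, $f,A\to1$ as $r\to\infty$, $f(v,0)=1$, $\partial_rf(v,0)=\partial_rA(v,0)=0$; $f(v,\cdot)$ has exactly two zeros $r_+(v)>r_-(v)$ (outer/inner apparent horizons, AHs), $f=F(r-r_+)(r-r_-)$ with $F>0$, and $h=AF>0$. Assumptions: $\partial_v r_+<0$; $r_\pm(v)\to r_c$ as $v\to\infty$; the sign of $\partial_v r_-$ is constant; the $v\to\infty$ limits of $A,F,h$ behave as analytic functions of $r$, so all $\partial_r^n h$ converge as $v\to\infty$; $h_c=\lim_{v\to\infty}h(v,r_c)$. With $x=r-r_c$, $x_\pm=r_\pm-r_c$ and $h$ regarded as a function of $(v,x)$, radially outgoing null geodesics solve $dx/dv=\tfrac12h(v,x)(x-x_+(v))(x-x_-(v))$. Case 3 means $\partial_v r_-<0$. In Case 3, Class 1 means all outgoing null geodesics emitted from the inner AH reach the outer AH; Class 2 means some of them do not. *)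

(* Defs.v *)
From Stdlib Require Import Reals.
From Coquelicot Require Import Coquelicot.
Open Scope R_scope.

(* Coordinates: x = r - r_c, x_pm = r_pm - r_c; h is regarded as a function
   of (v, x). *)
Definition outgoing_null_geodesic (h : R -> R -> R) (xp xm : R -> R)
  (v1 : R) (x : R -> R) : Prop :=
  forall v, v1 <= v ->
    is_derive x v (/ 2 * h v (x v) * (x v - xp v) * (x v - xm v)).

Definition emitted_from_inner_AH (xm : R -> R) (v1 : R) (x : R -> R) : Prop :=
  x v1 = xm v1.

Definition reaches_outer_AH (xp : R -> R) (v1 : R) (x : R -> R) : Prop :=
  exists v2, v1 <= v2 /\ x v2 = xp v2.

Definition class2 (h : R -> R -> R) (xp xm : R -> R) : Prop :=
  exists (v1 : R) (x : R -> R),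
    outgoing_null_geodesic h xp xm v1 x /\
    emitted_from_inner_AH xm v1 x /\
    ~ reaches_outer_AH xp v1 x.

(* Main.v *)
Require Import Defs.
From Stdlib Require Import Reals Lra Lia Classical ClassicalEpsilon.
From Coquelicot Require Import Coquelicot.
Open Scope R_scope.
Set Bullet Behavior "Strict Subproofs".


Lemma lip_cont (z : R -> R) (B : R) t :
  (forall u v, Rabs (z u - z v) <= B * Rabs (u - v)) -> continuous z t.
Proof.
  intros H. apply continuity_pt_filterlim.
  intros eps Heps. exists (eps / (Rabs B + 1)). split.
  { apply Rdiv_lt_0_compat; [lra| pose proof (Rabs_pos B); lra]. }
  intros u [_ Hu]. simpl in *. unfold R_dist in *.
  pose proof (Rabs_pos B). pose proof (Rabs_pos (u - t)).
  eapply Rle_lt_trans. apply H.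
  apply Rle_lt_trans with ((Rabs B + 1) * Rabs (u - t)).
  { apply Rmult_le_compat_r; [lra|]. pose proof (Rle_abs B); lra. }
  apply Rmult_lt_reg_r with (/ (Rabs B + 1)). apply Rinv_0_lt_compat; lra.
  rewrite Rmult_comm, <- Rmult_assoc, Rinv_l, Rmult_1_l by lra. exact Hu.
Qed.

Lemma cont_comp (G : R -> R -> R) (z : R -> R) t :
  (forall s u, continuous (fun p : R * R => G (fst p) (snd p)) (s, u)) ->
  continuous z t -> continuous (fun s => G s (z s)) t.
Proof.
  intros HG Hz. apply (continuous_comp_2 (fun s => s) z G).
  apply continuous_id. exact Hz. apply HG.
Qed.


Lemma RInt_diff (f : R -> R) (B a t t' : R) :
  (forall u v, ex_RInt f u v) -> (forall s, Rabs (f s) <= B) ->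
  Rabs (RInt f a t - RInt f a t') <= B * Rabs (t - t').
Proof.
  intros Hex HB.
  assert (E : (RInt f a t : R) = RInt f a t' + RInt f t' t).
  { rewrite <- (RInt_Chasles f a t' t) by auto. reflexivity. }
  assert (E' : @eq R (RInt f a t' + RInt f t' t - RInt f a t') (RInt f t' t)) by ring.
  rewrite E, E'.
  destruct (Rle_dec t' t) as [Hle|Hlt].
  - rewrite (Rabs_right (t - t')) by lra. rewrite Rmult_comm.
    apply abs_RInt_le_const; auto.
  - assert (E2 : (RInt f t' t : R) = - RInt f t t').
    { rewrite <- opp_RInt_swap by auto. reflexivity. }
    rewrite E2, Rabs_Ropp.
    rewrite (Rabs_left (t - t')) by lra. replace (- (t - t')) with (t' - t) by ring.
    rewrite Rmult_comm. apply abs_RInt_le_const; auto. lra.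
Qed.

Lemma abs_RInt_le_fun (g h : R -> R) (a b : R) :
  a <= b -> ex_RInt g a b -> ex_RInt h a b ->
  (forall x, a < x < b -> Rabs (g x) <= h x) -> Rabs (RInt g a b) <= RInt h a b.
Proof.
  intros Hab Hg Hh H. apply Rabs_le. split.
  - assert (E : RInt (fun x => - h x) a b = - RInt h a b).
    { apply is_RInt_unique. exact (is_RInt_opp _ _ _ _ (RInt_correct _ _ _ Hh)). }
    assert (RInt (fun x => - h x) a b <= RInt g a b).
    { apply RInt_le; auto. exact (ex_RInt_opp h a b Hh).
      intros x Hx. specialize (H x Hx). apply Rabs_le_between in H. lra. }
    lra.
  - apply RInt_le; auto. intros x Hx. specialize (H x Hx).
    pose proof (Rle_abs (g x)); lra.
Qed.

Lemma zero_geom (c D : R) : (forall n, c <= D * (/2) ^ n) -> c <= 0.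
Proof.
  intros H. destruct (Rle_dec c 0) as [|Hc]; [auto|exfalso].
  assert (Hy : 0 < c / (Rabs D + 1)).
  { apply Rdiv_lt_0_compat. lra. pose proof (Rabs_pos D); lra. }
  destruct (pow_lt_1_zero (/2)) with (y := c / (Rabs D + 1)) as [N HN].
  { rewrite Rabs_right; lra. } exact Hy.
  specialize (HN N (le_n N)). specialize (H N).
  assert (Hq : 0 < (/2) ^ N) by (apply pow_lt; lra).
  rewrite Rabs_right in HN by lra.
  assert (D * (/2)^N <= Rabs D * (/2)^N).
  { apply Rmult_le_compat_r; [lra| apply Rle_abs]. }
  assert ((Rabs D + 1) * (/2)^N < c).
  { apply Rmult_lt_reg_r with (/ (Rabs D + 1)). apply Rinv_0_lt_compat; pose proof (Rabs_pos D); lra.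
    replace ((Rabs D + 1) * (/ 2) ^ N * / (Rabs D + 1)) with ((/2)^N).
    exact HN. field. pose proof (Rabs_pos D); lra. }
  lra.
Qed.

Lemma geom_seq (u : nat -> R) (W : R) :
  (forall n, Rabs (u (S n) - u n) <= W * (/2) ^ n) ->
  is_lim_seq u (real (Lim_seq u)) /\ forall n, Rabs (real (Lim_seq u) - u n) <= 2 * W * (/2) ^ n.
Proof.
  intros H.
  assert (HW : 0 <= W).
  { specialize (H O). simpl in H. pose proof (Rabs_pos (u 1%nat - u O)). lra. }
  assert (Hk : forall n k, Rabs (u (n + k)%nat - u n) <= 2 * W * ((/2)^n - (/2)^(n+k))).
  { intros n k. induction k.
    - rewrite Nat.add_0_r. unfold Rminus. rewrite Rplus_opp_r, Rabs_R0. lra.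
    - replace (u (n + S k)%nat - u n) with ((u (S (n + k)) - u (n + k)%nat) + (u (n+k)%nat - u n))
        by (rewrite Nat.add_succ_r; ring).
      eapply Rle_trans. apply Rabs_triang.
      specialize (H (n + k)%nat).
      rewrite Nat.add_succ_r. simpl pow. lra. }
  assert (Hm : forall n m, (n <= m)%nat -> Rabs (u m - u n) <= 2 * W * (/2)^n).
  { intros n m Hnm. replace m with (n + (m - n))%nat by lia.
    eapply Rle_trans. apply Hk. assert (0 <= (/2)^(n + (m-n))) by (apply pow_le; lra).
    apply Rmult_le_compat_l; lra. }
  assert (Hex : ex_finite_lim_seq u).
  { apply ex_lim_seq_cauchy_corr. intros eps.
    destruct (pow_lt_1_zero (/2)) with (y := eps / (4 * W + 1)) as [N HN].
    { rewrite Rabs_right; lra. }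
    { apply Rdiv_lt_0_compat. apply cond_pos. lra. }
    exists N. intros n m Hn Hm'.
    specialize (HN N (le_n N)). rewrite Rabs_right in HN by (apply Rle_ge, pow_le; lra).
    pose proof (Hm N n Hn). pose proof (Hm N m Hm').
    assert (4 * W * (/2)^N < eps).
    { assert ((4*W+1) * (/2)^N < eps).
      { apply Rmult_lt_reg_r with (/ (4*W+1)). apply Rinv_0_lt_compat; lra.
        replace ((4 * W + 1) * (/ 2) ^ N * / (4 * W + 1)) with ((/2)^N) by (field; lra).
        exact HN. }
      assert (0 <= (/2)^N) by (apply pow_le; lra). nra. }
    replace (u n - u m) with ((u n - u N) - (u m - u N)) by ring.
    eapply Rle_lt_trans. unfold Rminus at 1. apply Rabs_triang.
    rewrite Rabs_Ropp. lra. }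
  pose proof (Lim_seq_correct' u Hex) as Hl. split; [exact Hl|].
  intros n.
  assert (Hl2 := is_lim_seq_abs _ _ (is_lim_seq_minus' _ _ _ _ Hl (is_lim_seq_const (u n)))).
  simpl in Hl2.
  assert (Rbar_le (Rabs (Lim_seq u - u n)) (2 * W * (/2)^n)).
  { apply is_lim_seq_le_loc with (fun m => Rabs (u m - u n)) (fun _ => 2 * W * (/2)^n).
    exists n. intros m Hm'. apply Hm. lia. exact Hl2. apply is_lim_seq_const. }
  exact H0.
Qed.


Definition picard (G : R -> R -> R) (a x0 : R) (z : R -> R) (t : R) : R :=
  x0 + RInt (fun s => G s (z s)) a t.
Fixpoint piter (G : R -> R -> R) (a x0 : R) (n : nat) : R -> R :=
  match n with O => fun _ => x0 | S n => picard G a x0 (piter G a x0 n) end.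

Lemma exR_lip (G : R -> R -> R) (z : R -> R) (B : R) :
  (forall z t, continuous z t -> continuous (fun s => G s (z s)) t) ->
  (forall u v, Rabs (z u - z v) <= B * Rabs (u - v)) ->
  forall u v, ex_RInt (fun s => G s (z s)) u v.
Proof.
  intros HGc Hz u v. apply (ex_RInt_continuous (V := R_CompleteNormedModule)). intros; apply HGc.
  apply (lip_cont z B); auto.
Qed.

Lemma le_exp (u : R) : u <= exp u.
Proof.
  destruct (Req_dec u 0) as [->|Hu]. rewrite exp_0; lra.
  pose proof (exp_ineq1 u Hu); lra.
Qed.

Lemma RInt_exp (c L a t : R) : L <> 0 ->
  is_RInt (fun s => c * exp (2 * L * (s - a))) a t
          (c * exp (2 * L * (t - a)) / (2 * L) - c / (2 * L)).
Proof.
  intros HL.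
  replace (c * exp (2 * L * (t - a)) / (2 * L) - c / (2 * L)) with
    (minus ((fun s => c * exp (2 * L * (s - a)) / (2 * L)) t)
           ((fun s => c * exp (2 * L * (s - a)) / (2 * L)) a)).
  2:{ simpl. unfold minus, plus, opp; simpl. replace (a - a) with 0 by ring.
      rewrite Rmult_0_r, exp_0. field. auto. }
  apply (is_RInt_derive (V := R_CompleteNormedModule) (fun s => c * exp (2 * L * (s - a)) / (2 * L)) (fun s => c * exp (2 * L * (s - a)))).
  - intros x _. auto_derive. auto. unfold Rminus. field. auto.
  - intros x _. apply (@ex_derive_continuous R_AbsRing R_NormedModule). auto_derive. auto.
Qed.



Lemma piter_a G a x0 n : piter G a x0 n a = x0.
Proof.
  destruct n; simpl. reflexivity. unfold picard. rewrite RInt_point.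
  change (x0 + 0 = x0). ring.
Qed.

Lemma piter_lip G a x0 B :
  (forall z t, continuous z t -> continuous (fun s => G s (z s)) t) ->
  (forall s u, Rabs (G s u) <= B) ->
  forall n u v, Rabs (piter G a x0 n u - piter G a x0 n v) <= B * Rabs (u - v).
Proof.
  intros HGc HB.
  assert (HB0 : 0 <= B) by (specialize (HB 0 0); pose proof (Rabs_pos (G 0 0)); lra).
  induction n; intros u v; simpl.
  - unfold Rminus. rewrite Rplus_opp_r, Rabs_R0. pose proof (Rabs_pos (u + - v)). nra.
  - unfold picard.
    replace (x0 + RInt (fun s => G s (piter G a x0 n s)) a u -
             (x0 + RInt (fun s => G s (piter G a x0 n s)) a v)) with
      (RInt (fun s => G s (piter G a x0 n s)) a u - RInt (fun s => G s (piter G a x0 n s)) a v) by ring.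
    apply RInt_diff; auto. apply (exR_lip G _ B); auto.
Qed.

Lemma piter_est G a x0 B T L :
  (forall z t, continuous z t -> continuous (fun s => G s (z s)) t) ->
  (forall s u, Rabs (G s u) <= B) ->
  0 < L -> (forall s u w, a <= s <= T -> Rabs (G s u - G s w) <= L * Rabs (u - w)) ->
  forall n t, a <= t <= T ->
    Rabs (piter G a x0 (S n) t - piter G a x0 n t) <=
      B / (2 * L) * exp (2 * L * (t - a)) * (/2) ^ n.
Proof.
  intros HGc HB HL HLip.
  assert (HB0 : 0 <= B) by (specialize (HB 0 0); pose proof (Rabs_pos (G 0 0)); lra).
  assert (HK : 0 <= B / (2 * L)) by (apply Rmult_le_pos; [lra| left; apply Rinv_0_lt_compat; lra]).
  assert (Hlp := piter_lip G a x0 B HGc HB).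
  assert (Hex : forall n u v, ex_RInt (fun s => G s (piter G a x0 n s)) u v).
  { intros n. apply (exR_lip G _ B); auto. }
  induction n; intros t Ht.
  - simpl. unfold picard.
    assert (E0 : @eq R (x0 + RInt (fun s => G s x0) a t - x0) (RInt (fun s => G s x0) a t)) by ring.
    rewrite E0.
    eapply Rle_trans. apply abs_RInt_le_const. lra.
    apply (Hex O). intros; apply HB.
    pose proof (le_exp (2 * L * (t - a))).
    replace ((t - a) * B) with (B / (2 * L) * (2 * L * (t - a))) by (field; lra).
    rewrite Rmult_1_r. apply Rmult_le_compat_l; auto.
  - change (piter G a x0 (S (S n)) t) with (x0 + RInt (fun s => G s (piter G a x0 (S n) s)) a t).
    change (piter G a x0 (S n) t) with (x0 + RInt (fun s => G s (piter G a x0 n s)) a t).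
    set (c := L * (B / (2 * L)) * (/2) ^ n).
    assert (Hc : 0 <= c) by (unfold c; apply Rmult_le_pos; [nra| apply pow_le; lra]).
    assert (E1 : @eq R (RInt (fun s => G s (piter G a x0 (S n) s) - G s (piter G a x0 n s)) a t)
       (RInt (fun s => G s (piter G a x0 (S n) s)) a t - RInt (fun s => G s (piter G a x0 n s)) a t)).
    { apply is_RInt_unique.
      apply (is_RInt_minus (V := R_CompleteNormedModule)); apply (RInt_correct (V := R_CompleteNormedModule)); apply Hex. }
    assert (E : @eq R (x0 + RInt (fun s => G s (piter G a x0 (S n) s)) a t -
       (x0 + RInt (fun s => G s (piter G a x0 n s)) a t))
       (RInt (fun s => G s (piter G a x0 (S n) s) - G s (piter G a x0 n s)) a t)).
    { rewrite E1. ring. }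
    rewrite E.
    eapply Rle_trans. apply abs_RInt_le_fun with (h := fun s => c * exp (2 * L * (s - a))).
    + lra.
    + apply (ex_RInt_minus (V := R_CompleteNormedModule)); apply Hex.
    + eexists. apply RInt_exp. lra.
    + intros s Hs. eapply Rle_trans. apply HLip. lra.
      eapply Rle_trans. apply Rmult_le_compat_l. lra. apply IHn. lra.
      unfold c. right. ring.
    + rewrite (is_RInt_unique _ _ _ _ (RInt_exp c L a t ltac:(lra))).
      assert (0 <= c / (2 * L)) by (apply Rmult_le_pos; [lra| left; apply Rinv_0_lt_compat; lra]).
      assert (E3 : c * exp (2 * L * (t - a)) / (2 * L) = B / (2 * L) * exp (2 * L * (t - a)) * (/ 2 * (/ 2) ^ n))
        by (unfold c; field; lra).
      simpl pow. rewrite E3. lra.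
Qed.

Definition xlim G a x0 t := real (Lim_seq (fun n => piter G a x0 n t)).

Lemma conv G a x0 B T L :
  (forall z t, continuous z t -> continuous (fun s => G s (z s)) t) ->
  (forall s u, Rabs (G s u) <= B) ->
  a <= T -> 0 < L -> (forall s u w, a <= s <= T -> Rabs (G s u - G s w) <= L * Rabs (u - w)) ->
  exists W, forall s, a <= s <= T ->
    is_lim_seq (fun n => piter G a x0 n s) (xlim G a x0 s) /\
    forall n, Rabs (xlim G a x0 s - piter G a x0 n s) <= 2 * W * (/2) ^ n.
Proof.
  intros HGc HB HaT HL HLip.
  assert (HB0 : 0 <= B) by (specialize (HB 0 0); pose proof (Rabs_pos (G 0 0)); lra).
  assert (HK : 0 <= B / (2 * L)) by (apply Rmult_le_pos; [lra| left; apply Rinv_0_lt_compat; lra]).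
  exists (B / (2 * L) * exp (2 * L * (T - a))). intros s Hs.
  apply geom_seq. intros n.
  eapply Rle_trans. apply (piter_est G a x0 B T L); auto.
  apply Rmult_le_compat_r. apply pow_le; lra.
  apply Rmult_le_compat_l. auto.
  destruct (Req_dec s T) as [->|]. lra. left. apply exp_increasing. nra.
Qed.

Lemma rmax_lip a u v : Rabs (Rmax a u - Rmax a v) <= 1 * Rabs (u - v).
Proof.
  unfold Rmax. destruct (Rle_dec a u); destruct (Rle_dec a v);
  unfold Rabs; repeat destruct Rcase_abs; lra.
Qed.

Lemma ode_exists (G : R -> R -> R) (a x0 B : R) :
  (forall z t, continuous z t -> continuous (fun s => G s (z s)) t) ->
  (forall s u, Rabs (G s u) <= B) ->
  (forall T, exists L, 0 < L /\ forall s u w, a <= s <= T -> Rabs (G s u - G s w) <= L * Rabs (u - w)) ->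
  exists x : R -> R, x a = x0 /\ forall t, a <= t -> is_derive x t (G t (x t)).
Proof.
  intros HGc HB HLT.
  assert (HB0 : 0 <= B) by (specialize (HB 0 0); pose proof (Rabs_pos (G 0 0)); lra).
  assert (Hlp := piter_lip G a x0 B HGc HB).
  assert (Hxl : forall s s', a <= s -> a <= s' -> Rabs (xlim G a x0 s - xlim G a x0 s') <= B * Rabs (s - s')).
  { intros s s' Hs Hs'.
    destruct (HLT (Rmax s s')) as [L [HL HLip]].
    destruct (conv G a x0 B (Rmax s s') L HGc HB) as [W HW]; auto.
    { eapply Rle_trans. apply Hs. apply Rmax_l. }
    destruct (HW s) as [_ H1]. split; auto. apply Rmax_l.
    destruct (HW s') as [_ H2]. split; auto. apply Rmax_r.
    cut (Rabs (xlim G a x0 s - xlim G a x0 s') - B * Rabs (s - s') <= 0). lra.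
    apply (zero_geom _ (4 * W)). intros n.
    specialize (H1 n). specialize (H2 n). specialize (Hlp n s s').
    replace (xlim G a x0 s - xlim G a x0 s') with ((xlim G a x0 s - piter G a x0 n s) + (piter G a x0 n s - piter G a x0 n s')
       - (xlim G a x0 s' - piter G a x0 n s')) by ring.
    pose proof (Rabs_triang ((xlim G a x0 s - piter G a x0 n s) + (piter G a x0 n s - piter G a x0 n s'))
       (- (xlim G a x0 s' - piter G a x0 n s'))).
    pose proof (Rabs_triang (xlim G a x0 s - piter G a x0 n s) (piter G a x0 n s - piter G a x0 n s')).
    rewrite Rabs_Ropp in H. unfold Rminus in *. lra. }
  set (X := fun s => xlim G a x0 (Rmax a s)).
  assert (HX : forall u v, Rabs (X u - X v) <= B * Rabs (u - v)).
  { intros u v. unfold X. eapply Rle_trans. apply Hxl; apply Rmax_l.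
    apply Rmult_le_compat_l; auto. pose proof (rmax_lip a u v); lra. }
  assert (HexX : forall u v, ex_RInt (fun s => G s (X s)) u v) by (apply (exR_lip G X B); auto).
  assert (HXa : forall t, a <= t -> X t = xlim G a x0 t).
  { intros t Ht. unfold X. rewrite Rmax_right; auto. }
  assert (Hint : forall t, a <= t -> xlim G a x0 t = x0 + RInt (fun s => G s (X s)) a t).
  { intros t Ht.
    destruct (HLT t) as [L [HL HLip]].
    destruct (conv G a x0 B t L HGc HB) as [W HW]; auto.
    assert (HW0 : 0 <= W).
    { destruct (HW t) as [_ H1]. lra. specialize (H1 O). simpl in H1.
      pose proof (Rabs_pos (xlim G a x0 t - x0)). lra. }
    cut (Rabs (xlim G a x0 t - (x0 + RInt (fun s => G s (X s)) a t)) <= 0).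
    { intros H. pose proof (Rabs_pos (xlim G a x0 t - (x0 + RInt (fun s => G s (X s)) a t))).
      assert (Rabs (xlim G a x0 t - (x0 + RInt (fun s => G s (X s)) a t)) = 0) by lra.
      apply Rabs_eq_0 in H1. lra. }
    apply (zero_geom _ (2 * W + (t - a) * (L * (2 * W)))). intros n.
    assert (Hexn := exR_lip G _ B HGc (Hlp n)).
    assert (E1 : @eq R (RInt (fun s => G s (piter G a x0 n s) - G s (X s)) a t)
       (RInt (fun s => G s (piter G a x0 n s)) a t - RInt (fun s => G s (X s)) a t)).
    { apply is_RInt_unique.
      apply (is_RInt_minus (V := R_CompleteNormedModule)); apply (RInt_correct (V := R_CompleteNormedModule)); auto. }
    assert (Hb2 : Rabs (RInt (fun s => G s (piter G a x0 n s) - G s (X s)) a t) <= (t - a) * (L * (2 * W * (/2)^n))).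
    { apply abs_RInt_le_const. lra.
      apply (ex_RInt_minus (V := R_CompleteNormedModule)); auto.
      intros s Hs. rewrite HXa by lra. eapply Rle_trans. apply HLip. lra.
      apply Rmult_le_compat_l. lra. rewrite Rabs_minus_sym. apply (proj2 (HW s ltac:(lra))). }
    destruct (HW t) as [_ H1]. lra. specialize (H1 (S n)). simpl in H1.
    change (piter G a x0 (S n) t) with (x0 + RInt (fun s => G s (piter G a x0 n s)) a t) in H1.
    replace (xlim G a x0 t - (x0 + RInt (fun s => G s (X s)) a t)) with
      ((xlim G a x0 t - (x0 + RInt (fun s => G s (piter G a x0 n s)) a t)) +
       (RInt (fun s => G s (piter G a x0 n s)) a t - RInt (fun s => G s (X s)) a t)) by ring.
    rewrite <- E1.
    eapply Rle_trans. apply Rabs_triang.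
    assert (0 <= (/2)^n) by (apply pow_le; lra).
    unfold picard in H1. nra. }
  exists (fun t => x0 + RInt (fun s => G s (X s)) a t). split.
  - rewrite RInt_point. change (x0 + 0 = x0). ring.
  - intros t Ht.
    assert (Hd : is_derive (fun u => RInt (fun s => G s (X s)) a u) t (G t (X t))).
    { apply (is_derive_RInt (V := R_CompleteNormedModule) (fun s => G s (X s)) (fun u => RInt (fun s => G s (X s)) a u) a t).
      apply filter_forall. intros; apply (RInt_correct (V := R_CompleteNormedModule)); auto.
      apply HGc. apply (lip_cont X B); auto. }
    pose proof (is_derive_plus (fun _ => x0) (fun u => RInt (fun s => G s (X s)) a u) t zero (G t (X t))
       (is_derive_const x0 t) Hd) as H.
    rewrite plus_zero_l in H.
    rewrite <- Hint, <- HXa by auto. exact H.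
Qed.


Lemma deriv_cont_eps (f : R -> R) (m l : R) : is_derive f m l ->
  forall eps, 0 < eps -> exists del, 0 < del /\ forall s, Rabs (s - m) < del -> Rabs (f s - f m) < eps.
Proof.
  intros Hd eps He. apply is_derive_Reals in Hd.
  assert (Hc : continuity_pt f m) by (apply derivable_continuous_pt; exists l; exact Hd).
  destruct (Hc eps He) as [del [Hdel H]]. exists del. split; auto.
  intros s Hs. destruct (Req_dec s m) as [->|Hne].
  - unfold Rminus. rewrite Rplus_opp_r, Rabs_R0. auto.
  - apply H. split. split. exact I. auto. exact Hs.
Qed.

Lemma barrier (f df : R -> R) (a : R) :
  (forall t, a <= t -> is_derive f t (df t)) -> 0 < f a ->
  (forall t, a < t -> f t = 0 -> 0 < df t) -> forall t, a <= t -> 0 < f t.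
Proof.
  intros Hd Ha Hz t1 Ht1. apply Rnot_le_lt; intro Hf1.
  set (E := fun y => exists s, y = -s /\ a <= s <= t1 /\ f s <= 0).
  destruct (completeness E) as [M0 [Hub Hlub]].
  { exists (-a). intros y [s [-> [Hs _]]]. lra. }
  { exists (-t1). exists t1. repeat split; auto; lra. }
  set (m := - M0).
  assert (Hlow : forall s, a <= s <= t1 -> f s <= 0 -> m <= s).
  { intros s Hs Hfs. assert (E (-s)) by (exists s; auto). apply Hub in H. unfold m; lra. }
  assert (Happ : forall e, 0 < e -> exists s, a <= s <= t1 /\ f s <= 0 /\ s < m + e).
  { intros e He. apply NNPP. intros Hn.
    assert (M0 <= M0 - e).
    { apply Hlub. intros y [s [-> [Hs Hfs]]].
      apply Rnot_lt_le. intros Hlt. apply Hn. exists s. split; auto. split; auto. unfold m; lra. }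
    lra. }
  assert (Hma : a <= m).
  { assert (M0 <= -a). { apply Hlub. intros y [s [-> [Hs _]]]. lra. } unfold m; lra. }
  assert (Hmt : m <= t1) by (apply Hlow; auto; lra).
  pose proof (Hd m Hma) as Hdm.
  destruct (total_order_T (f m) 0) as [[Hneg|Hzero]|Hpos].
  - assert (Ham : a < m) by (destruct Hma as [|<-]; auto; lra).
    destruct (deriv_cont_eps f m (df m) Hdm (- f m)) as [del [Hdel Hc]]; [lra|].
    set (s := m - Rmin (del/2) ((m - a)/2)).
    assert (Hmin1 : Rmin (del/2) ((m-a)/2) <= del/2) by apply Rmin_l.
    assert (Hmin2 : Rmin (del/2) ((m-a)/2) <= (m-a)/2) by apply Rmin_r.
    assert (Hmin3 : 0 < Rmin (del/2) ((m-a)/2)) by (apply Rmin_glb_lt; lra).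
    assert (Hfs : f s < 0).
    { assert (Rabs (s - m) < del) by (unfold s; rewrite Rabs_left; lra).
      specialize (Hc s H). apply Rabs_lt_between in Hc. lra. }
    assert (m <= s) by (apply Hlow; [unfold s; lra| lra]).
    unfold s in H; lra.
  - assert (Ham : a < m) by (destruct Hma as [|<-]; auto; lra).
    pose proof (Hz m Ham Hzero) as Hdf.
    apply is_derive_Reals in Hdm.
    destruct (Hdm (df m) Hdf) as [del Hdel].
    set (h := - Rmin (del/2) ((m - a)/2)).
    assert (Hmin1 : Rmin (del/2) ((m-a)/2) <= del/2) by apply Rmin_l.
    assert (Hmin2 : Rmin (del/2) ((m-a)/2) <= (m-a)/2) by apply Rmin_r.
    assert (Hmin3 : 0 < Rmin (del/2) ((m-a)/2)) by (apply Rmin_glb_lt; [pose proof (cond_pos del)|]; lra).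
    assert (Hh0 : h <> 0) by (unfold h; lra).
    assert (Hhd : Rabs h < del) by (unfold h; rewrite Rabs_left; lra).
    specialize (Hdel h Hh0 Hhd). rewrite Hzero in Hdel.
    apply Rabs_lt_between in Hdel.
    assert (Hq : 0 < (f (m + h) - 0) / h) by lra.
    assert (Hfs : f (m + h) < 0).
    { replace (f (m + h)) with ((f (m + h) - 0) / h * h) by (field; auto).
      assert (h < 0) by (unfold h; lra). nra. }
    assert (m <= m + h) by (apply Hlow; [unfold h; lra| lra]).
    unfold h in H; lra.
  - assert (Hmt' : m < t1) by (destruct Hmt as [Hlt|Heq]; auto; subst; lra).
    destruct (deriv_cont_eps f m (df m) Hdm (f m)) as [del [Hdel Hc]]; [lra|].
    destruct (Happ del Hdel) as [s [Hs [Hfs Hsm]]].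
    assert (m <= s) by (apply Hlow; auto).
    assert (Rabs (s - m) < del) by (rewrite Rabs_right; lra).
    specialize (Hc s H0). apply Rabs_lt_between in Hc. lra.
Qed.


Fixpoint lsum (f : R -> R -> R) (l : list (Compactness.Tn 2 R)) : R :=
  match l with
  | nil => 0
  | cons p l' => Rabs (f (fst p) (fst (snd p))) + lsum f l'
  end.

Lemma lsum_in f l p : List.In p l -> Rabs (f (fst p) (fst (snd p))) <= lsum f l.
Proof.
  assert (Hpos : forall l, 0 <= lsum f l).
  { induction l0; simpl. lra. pose proof (Rabs_pos (f (fst a) (fst (snd a)))); lra. }
  induction l; simpl. tauto.
  intros [->|H]. specialize (Hpos l); lra.
  specialize (IHl H). pose proof (Rabs_pos (f (fst a) (fst (snd a)))); lra.
Qed.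

Lemma bound2d (f : R -> R -> R) a b c d :
  (forall x y, continuous (fun p : R * R => f (fst p) (snd p)) (x, y)) ->
  exists M, forall x y, a <= x <= b -> c <= y <= d -> Rabs (f x y) <= M.
Proof.
  intros Hc.
  assert (Hdel : forall p : Compactness.Tn 2 R, exists e : posreal, forall x y,
     Rabs (x - fst p) < e -> Rabs (y - fst (snd p)) < e ->
     Rabs (f x y - f (fst p) (fst (snd p))) < 1).
  { intros p. specialize (Hc (fst p) (fst (snd p))).
    apply filterlim_locally with (eps := mkposreal 1 Rlt_0_1) in Hc.
    destruct Hc as [e He]. exists e. intros x y Hx Hy.
    specialize (He (x, y)). simpl in He. apply He. split; assumption. }
  set (delta := fun p => proj1_sig (constructive_indefinite_description _ (Hdel p))).
  pose proof (compactness_list 2 (a, (c, tt)) (b, (d, tt)) delta) as Hcl.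
  apply NNPP. intros Hn. apply Hcl. intros [l Hl]. apply Hn.
  exists (lsum f l + 1). intros x y Hx Hy.
  destruct (Hl (x, (y, tt))) as [t [Hin [_ Hcl']]].
  { simpl. tauto. }
  destruct t as [t1 [t2 []]]. simpl in Hcl'.
  pose proof (lsum_in f l _ Hin) as Hs. simpl in Hs.
  destruct Hcl' as [H1 [H2 _]].
  pose proof (proj2_sig (constructive_indefinite_description _ (Hdel (t1, (t2, tt))))) as Hd.
  simpl in Hd. specialize (Hd x y H1 H2).
  pose proof (Rabs_triang_inv (f x y) (f t1 t2)). lra.
Qed.


Lemma cont_eps (g : R -> R) (x : R) : continuous g x ->
  forall e, 0 < e -> exists del, 0 < del /\ forall y, Rabs (y - x) < del -> Rabs (g y - g x) < e.
Proof.
  intros Hc e He. apply continuity_pt_filterlim in Hc.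
  destruct (Hc e He) as [del [Hdel H]]. exists del. split; auto.
  intros y Hy. destruct (Req_dec y x) as [->|Hne].
  - unfold Rminus. rewrite Rplus_opp_r, Rabs_R0. auto.
  - apply H. split. split. exact I. auto. exact Hy.
Qed.

Lemma lim_eps (f : R -> R) (l : R) : is_lim f p_infty l ->
  forall e, 0 < e -> exists M, forall x, M < x -> Rabs (f x - l) < e.
Proof.
  intros H e He. apply is_lim_spec in H. exact (H (mkposreal e He)).
Qed.

Definition clip (u : R) : R := Rmax (-1) (Rmin 1 u).

Lemma clip_range u : -1 <= clip u <= 1.
Proof. unfold clip, Rmax, Rmin. repeat destruct Rle_dec; lra. Qed.

Lemma clip_id u : -1 <= u <= 1 -> clip u = u.
Proof. intros H. unfold clip, Rmax, Rmin. repeat destruct Rle_dec; lra. Qed.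

Lemma clip_lip u w : Rabs (clip u - clip w) <= 1 * Rabs (u - w).
Proof.
  unfold clip, Rmax, Rmin. repeat destruct Rle_dec; unfold Rabs; repeat destruct Rcase_abs; lra.
Qed.

Lemma cmult (f g : R -> R) t : continuous f t -> continuous g t -> continuous (fun s => f s * g s) t.
Proof. intros; apply (continuous_mult f g); auto. Qed.
Lemma cminus (f g : R -> R) t : continuous f t -> continuous g t -> continuous (fun s => f s - g s) t.
Proof. intros; apply (continuous_minus f g); auto. Qed.
Lemma cconst (c t : R) : continuous (fun _ : R => c) t.
Proof. apply continuous_const. Qed.


Theorem proposition7
  (rc : R) (xp xm dxp dxm : R -> R) (h dh : R -> R -> R) (hinf : R -> R) (hc : R)
  (Horder : forall v, 0 < rc + xm v /\ xm v < xp v)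
  (Hdxp : forall v, is_derive xp v (dxp v))
  (Hdxm : forall v, is_derive xm v (dxm v))
  (Hdxp_neg : forall v, dxp v < 0)
  (Hdxm_neg : forall v, dxm v < 0)
  (Hxp_lim : is_lim xp p_infty 0)
  (Hxm_lim : is_lim xm p_infty 0)
  (Hh_pos : forall v x, 0 < h v x)
  (Hh_cont : forall v x, continuous (fun p : R * R => h (fst p) (snd p)) (v, x))
  (Hdh : forall v x, is_derive (h v) x (dh v x))
  (Hdh_cont : forall v x, continuous (fun p : R * R => dh (fst p) (snd p)) (v, x))
  (Hhinf_cont : forall x, continuous hinf x)
  (Hh_lim : forall K eps, 0 < eps -> exists V, forall v x,
       V < v -> Rabs x <= K -> Rabs (h v x - hinf x) < eps)
  (Hhc : is_lim (fun v => h v 0) p_infty hc)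
  (alpha eps v0 : R)
  (Halpha : 0 < alpha < 1)
  (Heps : 0 < eps)
  (Hineq : forall v, v0 < v ->
     alpha * dxp v + (1 - alpha) * dxm v >
       - (hc / 2) * alpha * (1 - alpha) * (1 - eps) * (xp v - xm v) ^ 2) :
  class2 h xp xm.
Proof.
  pose proof (lim_eps _ _ Hhc) as Hhc'.
  assert (Hhc0 : 0 <= hc).
  { apply Rnot_lt_le. intros Hlt. destruct (Hhc' (- hc)) as [M HM]. lra.
    specialize (HM (M + 1) ltac:(lra)). specialize (Hh_pos (M + 1) 0).
    apply Rabs_lt_between in HM. lra. }
  assert (Hhinf0 : hinf 0 = hc).
  { cut (Rabs (hinf 0 - hc) <= 0).
    { intros H. pose proof (Rabs_pos (hinf 0 - hc)).
      assert (Rabs (hinf 0 - hc) = 0) by lra. apply Rabs_eq_0 in H1. lra. }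
    apply Rnot_lt_le. intros Hd.
    destruct (Hhc' (Rabs (hinf 0 - hc) / 2)) as [M HM]. lra.
    destruct (Hh_lim 0 (Rabs (hinf 0 - hc) / 2)) as [V HV]. lra.
    set (v := Rmax M V + 1).
    specialize (HM v ltac:(unfold v; pose proof (Rmax_l M V); lra)).
    specialize (HV v 0 ltac:(unfold v; pose proof (Rmax_r M V); lra) ltac:(rewrite Rabs_R0; lra)).
    pose proof (Rabs_triang (hinf 0 - h v 0) (h v 0 - hc)).
    replace (hinf 0 - h v 0 + (h v 0 - hc)) with (hinf 0 - hc) in H by ring.
    rewrite Rabs_minus_sym in HV. lra. }
  assert (Hlow : exists V1 del, 0 < del /\ forall v x, V1 < v -> Rabs x < del -> hc * (1 - eps) < h v x).
  { destruct Hhc0 as [Hpos| <-].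
    - destruct (Hh_lim 1 (hc * eps / 2)) as [V HV]. apply Rmult_lt_0_compat; nra.
      destruct (cont_eps hinf 0 (Hhinf_cont 0) (hc * eps / 2)) as [d0 [Hd0 Hc0]]. nra.
      exists V, (Rmin d0 1). split. apply Rmin_glb_lt; lra.
      intros v x Hv Hx.
      assert (Hx1 : Rabs x <= 1) by (pose proof (Rmin_r d0 1); lra).
      assert (Hx0 : Rabs (x - 0) < d0) by (rewrite Rminus_0_r; pose proof (Rmin_l d0 1); lra).
      specialize (HV v x Hv Hx1). specialize (Hc0 x Hx0). rewrite Hhinf0 in Hc0.
      apply Rabs_lt_between in HV. apply Rabs_lt_between in Hc0. lra.
    - exists 0, 1. split. lra. intros. rewrite Rmult_0_l. apply Hh_pos. }
  destruct Hlow as [V1 [del [Hdel Hlow]]].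
  set (e0 := Rmin del 1).
  assert (He0 : 0 < e0) by (apply Rmin_glb_lt; lra).
  destruct (lim_eps _ _ Hxp_lim e0 He0) as [Mp HMp].
  destruct (lim_eps _ _ Hxm_lim e0 He0) as [Mm HMm].
  destruct (Hh_lim 1 1 Rlt_0_1) as [Vh HVh].
  set (v1 := Rmax (Rmax (Rmax v0 V1) (Rmax Mp Mm)) Vh + 1).
  assert (Hv1 : forall v, v1 <= v -> v0 < v /\ V1 < v /\ Mp < v /\ Mm < v /\ Vh < v).
  { intros v Hv. unfold v1 in Hv.
    pose proof (Rmax_l (Rmax (Rmax v0 V1) (Rmax Mp Mm)) Vh).
    pose proof (Rmax_r (Rmax (Rmax v0 V1) (Rmax Mp Mm)) Vh).
    pose proof (Rmax_l (Rmax v0 V1) (Rmax Mp Mm)).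
    pose proof (Rmax_r (Rmax v0 V1) (Rmax Mp Mm)).
    pose proof (Rmax_l v0 V1). pose proof (Rmax_r v0 V1).
    pose proof (Rmax_l Mp Mm). pose proof (Rmax_r Mp Mm). lra. }
  assert (He0d : e0 <= del) by apply Rmin_l.
  assert (He01 : e0 <= 1) by apply Rmin_r.
  assert (Hxps : forall v, v1 <= v -> Rabs (xp v) < e0).
  { intros v Hv. destruct (Hv1 v Hv) as [_ [_ [H _]]]. specialize (HMp v H). rewrite Rminus_0_r in HMp. exact HMp. }
  assert (Hxms : forall v, v1 <= v -> Rabs (xm v) < e0).
  { intros v Hv. destruct (Hv1 v Hv) as [_ [_ [_ [H _]]]]. specialize (HMm v H). rewrite Rminus_0_r in HMm. exact HMm. }
  destruct (bounded_continuity hinf (-1) 1) as [Mh HMh].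
  { intros x _. apply Hhinf_cont. }
  set (H := Mh + 1).
  assert (HhB : forall v u, v1 <= v -> -1 <= u <= 1 -> Rabs (h v u) <= H).
  { intros v u Hv Hu. destruct (Hv1 v Hv) as [_ [_ [_ [_ HV]]]].
    assert (Rabs u <= 1) by (apply Rabs_le; lra).
    specialize (HVh v u HV H0). specialize (HMh u Hu). change (norm (hinf u)) with (Rabs (hinf u)) in HMh.
    pose proof (Rabs_triang_inv (h v u) (hinf u)). unfold H; lra. }
  assert (Hxpc : forall v, continuous xp v) by (intros v; apply (@ex_derive_continuous R_AbsRing R_NormedModule); exists (dxp v); auto).
  assert (Hxmc : forall v, continuous xm v) by (intros v; apply (@ex_derive_continuous R_AbsRing R_NormedModule); exists (dxm v); auto).
  set (G := fun s u => / 2 * h (Rmax v1 s) (clip u) * (clip u - xp (Rmax v1 s)) * (clip u - xm (Rmax v1 s))).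
  assert (HGc : forall z t, continuous z t -> continuous (fun s => G s (z s)) t).
  { intros z t Hz. unfold G.
    assert (Hm : forall t, continuous (fun s => Rmax v1 s) t) by (intros; apply (lip_cont _ 1); apply rmax_lip).
    assert (Hw : continuous (fun s => clip (z s)) t).
    { apply (continuous_comp z clip). auto. apply (lip_cont _ 1). apply clip_lip. }
    apply cmult. apply cmult. apply cmult.
    apply cconst.
    apply (continuous_comp_2 (fun s => Rmax v1 s) (fun s => clip (z s)) h); auto.
    apply cminus; auto. apply (continuous_comp (fun s => Rmax v1 s) xp); auto.
    apply cminus; auto. apply (continuous_comp (fun s => Rmax v1 s) xm); auto. }
  assert (HH : 0 < H).
  { specialize (HMh 0 ltac:(lra)). change (norm (hinf 0)) with (Rabs (hinf 0)) in HMh.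
    pose proof (Rabs_pos (hinf 0)). unfold H; lra. }
  assert (Hpq : forall s, v1 <= s -> -1 < xp s < 1 /\ -1 < xm s < 1).
  { intros s Hs. specialize (Hxps s Hs). specialize (Hxms s Hs).
    apply Rabs_lt_between in Hxps. apply Rabs_lt_between in Hxms. lra. }
  assert (HB : forall s u, Rabs (G s u) <= 2 * H).
  { intros s u. unfold G.
    assert (Hm : v1 <= Rmax v1 s) by apply Rmax_l.
    destruct (Hpq _ Hm) as [Hp Hq].
    pose proof (clip_range u) as Hc.
    pose proof (HhB _ (clip u) Hm Hc) as Hh1.
    assert (H1 : Rabs (clip u - xp (Rmax v1 s)) <= 2) by (apply Rabs_le; lra).
    assert (H2 : Rabs (clip u - xm (Rmax v1 s)) <= 2) by (apply Rabs_le; lra).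
    rewrite !Rabs_mult. rewrite (Rabs_right (/2)) by lra.
    apply Rle_trans with (/ 2 * H * 2 * 2); [|lra].
    repeat apply Rmult_le_compat; try apply Rmult_le_pos; try apply Rabs_pos; try lra; try (apply Rmult_le_pos; [lra| apply Rabs_pos]). }
  assert (HLip : forall T, exists L, 0 < L /\ forall s u w, v1 <= s <= T ->
             Rabs (G s u - G s w) <= L * Rabs (u - w)).
  { intros T. destruct (bound2d dh v1 T (-3) 3 Hdh_cont) as [D HD].
    exists (2 * Rabs D + 2 * H + 1). split. pose proof (Rabs_pos D); lra.
    intros s u w Hs. unfold G. rewrite Rmax_right by lra.
    destruct (Hpq s ltac:(lra)) as [Hp Hq].
    pose proof (clip_range u) as Hcu. pose proof (clip_range w) as Hcw.
    pose proof (clip_lip u w) as Hcl.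
    set (u' := clip u) in *. set (w' := clip w) in *. set (p := xp s) in *. set (q := xm s) in *.
    assert (Hdh1 : Rabs (h s u' - h s w') <= Rabs D * Rabs (u' - w')).
    { apply (bounded_variation (h s) (dh s)). intros t Ht. split. apply Hdh.
      assert (Rabs (u' - w') <= 2) by (apply Rabs_le; lra).
      assert (-3 <= t <= 3).
      { assert (Rabs (t - w') <= 2) by lra. apply Rabs_le_between in H1. lra. }
      eapply Rle_trans. apply HD; lra. apply Rle_abs. }
    replace (/ 2 * h s u' * (u' - p) * (u' - q) - / 2 * h s w' * (w' - p) * (w' - q)) with
      (/ 2 * ((h s u' - h s w') * ((u' - p) * (u' - q)) + h s w' * ((u' - w') * (u' + w' - p - q)))) by ring.
    rewrite Rabs_mult, (Rabs_right (/2)) by lra.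
    eapply Rle_trans. apply Rmult_le_compat_l. lra. apply Rabs_triang.
    rewrite !Rabs_mult.
    assert (Hb1 : Rabs (u' - p) * Rabs (u' - q) <= 4).
    { assert (Rabs (u' - p) <= 2) by (apply Rabs_le; lra).
      assert (Rabs (u' - q) <= 2) by (apply Rabs_le; lra).
      pose proof (Rabs_pos (u' - p)). pose proof (Rabs_pos (u' - q)). nra. }
    assert (He1 : Rabs (u' + w' - p - q) <= 4) by (apply Rabs_le; lra).
    assert (Hc1 : Rabs (h s w') <= H) by (apply HhB; lra).
    pose proof (Rabs_pos (h s u' - h s w')). pose proof (Rabs_pos (u' - w')).
    pose proof (Rabs_pos (h s w')). pose proof (Rabs_pos (u' + w' - p - q)).
    pose proof (Rabs_pos D). pose proof (Rabs_pos (u' - p)). pose proof (Rabs_pos (u' - q)).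
    assert (Rabs (h s u' - h s w') * (Rabs (u' - p) * Rabs (u' - q)) <= Rabs D * Rabs (u' - w') * 4).
    { apply Rmult_le_compat; auto. apply Rmult_le_pos; apply Rabs_pos. }
    assert (Rabs (h s w') * (Rabs (u' - w') * Rabs (u' + w' - p - q)) <= H * (Rabs (u' - w') * 4)).
    { apply Rmult_le_compat; auto. apply Rmult_le_pos; apply Rabs_pos.
      apply Rmult_le_compat_l; auto. }
    assert (Rabs (u' - w') <= Rabs (u - w)) by lra.
    pose proof (Rabs_pos (u - w)). nra. }
  destruct (ode_exists G v1 (xm v1) (2 * H) HGc HB HLip) as [x [Hx0 Hx]].
  assert (HGe : forall t, v1 <= t -> -1 <= x t <= 1 ->
     G t (x t) = / 2 * h t (x t) * (x t - xp t) * (x t - xm t)).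
  { intros t Ht Hr. unfold G. rewrite Rmax_right by lra. rewrite clip_id by lra. reflexivity. }
  assert (Hlowb : forall t, v1 <= t -> 0 < x t + 1).
  { apply (barrier (fun t => x t + 1) (fun t => G t (x t))).
    - intros t Ht. pose proof (is_derive_plus x (fun _ => 1) t (G t (x t)) zero (Hx t Ht) (is_derive_const 1 t)) as Hd.
      rewrite plus_zero_r in Hd. exact Hd.
    - rewrite Hx0. destruct (Hpq v1 ltac:(lra)). lra.
    - intros t Ht H0. assert (Hxt : x t = -1) by lra.
      rewrite HGe by lra. rewrite Hxt. destruct (Hpq t ltac:(lra)) as [Hp Hq].
      specialize (Hh_pos t (-1)).
      assert (0 < (-1 - xp t) * (-1 - xm t)) by nra.
      nra. }
  set (yv := fun t => alpha * xp t + (1 - alpha) * xm t).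
  assert (Hys : forall t, v1 <= t -> Rabs (yv t) < e0).
  { intros t Ht. specialize (Hxps t Ht). specialize (Hxms t Ht).
    apply Rabs_lt_between in Hxps. apply Rabs_lt_between in Hxms. apply Rabs_lt_between.
    unfold yv. nra. }
  assert (Hupb : forall t, v1 <= t -> 0 < yv t - x t).
  { apply (barrier (fun t => yv t - x t) (fun t => alpha * dxp t + (1 - alpha) * dxm t - G t (x t))).
    - intros t Ht. unfold yv.
      exact (is_derive_minus _ _ t _ _ (is_derive_plus _ _ t _ _ (is_derive_scal _ t alpha _ (Hdxp t))
               (is_derive_scal _ t (1 - alpha) _ (Hdxm t))) (Hx t Ht)).
    - rewrite Hx0. unfold yv. destruct (Horder v1). nra.
    - intros t Ht H0. assert (Hxt : x t = yv t) by lra.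
      specialize (Hys t ltac:(lra)).
      assert (Hyr : -1 <= yv t <= 1) by (apply Rabs_lt_between in Hys; lra).
      rewrite HGe by (try rewrite Hxt; lra). rewrite Hxt.
      destruct (Hv1 t ltac:(lra)) as [Hv0 [HV1 _]].
      specialize (Hineq t Hv0).
      specialize (Hlow t (yv t) HV1 ltac:(lra)).
      destruct (Horder t) as [_ Hord].
      assert (E : / 2 * h t (yv t) * (yv t - xp t) * (yv t - xm t) =
                  - (/ 2) * h t (yv t) * alpha * (1 - alpha) * (xp t - xm t) ^ 2) by (unfold yv; ring).
      rewrite E.
      assert (Hk : 0 < alpha * (1 - alpha) * (xp t - xm t) ^ 2).
      { apply Rmult_lt_0_compat. nra. apply pow_lt. lra. }
      assert (hc * (1 - eps) * (alpha * (1 - alpha) * (xp t - xm t) ^ 2) <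
              h t (yv t) * (alpha * (1 - alpha) * (xp t - xm t) ^ 2)).
      { apply Rmult_lt_compat_r; auto. }
      nra. }
  exists v1, x. split; [|split].
  - intros v Hv. rewrite <- HGe. apply Hx; auto. auto.
    specialize (Hlowb v Hv). specialize (Hupb v Hv). specialize (Hys v Hv). apply Rabs_lt_between in Hys. lra.
  - exact Hx0.
  - intros [v2 [Hv2 Heq]]. specialize (Hupb v2 Hv2). unfold yv in Hupb.
    destruct (Horder v2). nra.
Qed.
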